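(* Let $m\ge 1$ and $1\le k_1<k_2$ be integers with $k_1+1-m>0$, and let $L>0$, $C_{k_1}>0$, $C_{k_2}>0$ be real constants. For $h>0$ and $i=1,2$ set $$\beta_{k_i}(h)=\min\left(L,\;C_{k_i}h^{k_i+1-m}\right),$$ and let $X^{(k_1)}$, $X^{(k_2)}$ be independent random variables with $X^{(k_i)}$ uniformly distributed on $[0,\beta_{k_i}(h)]$. Define $$h^*_{k_1,k_2}=\left(\frac{C_{k_1}}{C_{k_2}}\right)^{\frac{1}{k_2-k_1}},\qquad \hslash_{k_i}=\left(\frac{L}{C_{k_i}}\right)^{\frac{1}{k_i+1-m}}\ (i=1,2),$$ and $\mathcal{P}_{k_1,k_2}(h)=\mathrm{Prob}\{X^{(k_1)}\le X^{(k_2)}\}$. Then: (i) If $h^*_{k_1,k_2}\ge\max(\hslash_{k_1},\hslash_{k_2})$, then $\hslash_{k_1}\le\hslash_{k_2}$ and $$\mathcal{P}_{k_1,k_2}(h)=\begin{cases}\dfrac12\left(\dfrac{h}{h^*_{k_1,k_2}}\right)^{k_2-k_1} & \text{if } 0< h\le\hslash_{k_1},\\[2mm] \dfrac12\left(\dfrac{h}{\hslash_{k_2}}\right)^{k_2+1-m} & \text{if } \hslash_{k_1}\le h\le\hslash_{k_2},\\[2mm] \dfrac12 & \text{if } h\ge\hslash_{k_2}.\end{cases}$$ (ii) If $h^*_{k_1,k_2}\le\min(\hslash_{k_1},\hslash_{k_2})$, then $\hslash_{k_2}\le\hslash_{k_1}$ and $$\mathcal{P}_{k_1,k_2}(h)=\begin{cases}\dfrac12\left(\dfrac{h}{h^*_{k_1,k_2}}\right)^{k_2-k_1}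 & \text{if } 0< h\le h^*_{k_1,k_2},\\[2mm] 1-\dfrac12\left(\dfrac{h^*_{k_1,k_2}}{h}\right)^{k_2-k_1} & \text{if } h^*_{k_1,k_2}\le h\le\hslash_{k_2},\\[2mm] 1-\dfrac12\left(\dfrac{h}{\hslash_{k_1}}\right)^{k_1+1-m} & \text{if } \hslash_{k_2}\le h\le\hslash_{k_1},\\[2mm] \dfrac12 & \text{if } h\ge\hslash_{k_1}.\end{cases}$$
   Context: In the paper, $h$ is the mesh size of a finite element mesh, $X^{(k_i)}=\|u-u_h^{(k_i)}\|_{m,p,\Omega}$ is the $W^{m,p}$ error of the $P_{k_i}$ Lagrange finite element approximation of the solution $u$ of a variational problem, $L=\|l\|_{V'}/\alpha^*$ comes from a priori stability bounds, and $C_{k_i}=\mathscr{C}_{k_i}|u|_{k_i+1,p,\Omega}$ comes from the interpolation error estimate, so that $\beta_{k_i}(h)$ is the resulting upper bound on the error; the two errors are modeled as independent uniform random variables on $[0,\beta_{k_i}(h)]$. *)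

(* Defs.v *)
From HB Require Import structures.
From mathcomp Require Import all_boot all_order all_algebra.
From mathcomp Require Import all_classical all_reals all_analysis.
Set Implicit Arguments. Unset Strict Implicit. Unset Printing Implicit Defensive.
Import Order.TTheory GRing.Theory Num.Theory.
Local Open Scope classical_set_scope.
Local Open Scope ring_scope.

Definition indep2 {R : realType} {d : measure_display} {T : measurableType d}
  (P : probability T R) (X Y : {RV P >-> R}) : Prop :=
  forall A B : set R, measurable A -> measurable B ->
    P (X @^-1` A `&` Y @^-1` B) = (P (X @^-1` A) * P (Y @^-1` B))%E.

Definition is_uniform {R : realType} {d : measure_display} {T : measurableType d}
  (P : probability T R) (X : {RV P >-> R}) (a b : R) : Prop :=
  forall A : set R, measurable A ->
    distribution P X A = (\int[lebesgue_measure]_(x in A) (uniform_pdf a b x)%:E)%E.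

Definition beta {R : realType} (L C : R) (k m : nat) (h : R) : R :=
  Num.min L (C * h ^+ (k + 1 - m)).

Definition hstar {R : realType} (C1 C2 : R) (k1 k2 : nat) : R :=
  (C1 / C2) `^ (1 / (k2 - k1)%:R).

Definition hbar {R : realType} (L C : R) (k m : nat) : R :=
  (L / C) `^ (1 / (k + 1 - m)%:R).

Definition probLe {R : realType} {d : measure_display} {T : measurableType d}
  (P : probability T R) (X Y : {RV P >-> R}) : \bar R :=
  P [set w | X w <= Y w].

(* Main.v *)
Require Import Defs.
From HB Require Import structures.
From mathcomp Require Import all_boot all_order all_algebra.
From mathcomp Require Import all_classical all_reals all_analysis.
From mathcomp Require Import ring lra zify measurable_realfun.
Import numFieldNormedType.Exports.
Import Order.TTheory GRing.Theory Num.Theory.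
Local Open Scope classical_set_scope.
Local Open Scope ring_scope.

Lemma Vge (R : realType) (x y : R) : 0 < x -> 0 < y -> y <= x ->
  x^-1 * (Num.min x y - Num.min x y * Num.min x y / (2*y)) = y / (2*x).
Proof. by move=> x0 y0 yx; rewrite min_r //; field; rewrite !gt_eqF. Qed.

Lemma Vle (R : realType) (x y : R) : 0 < x -> 0 < y -> x <= y ->
  x^-1 * (Num.min x y - Num.min x y * Num.min x y / (2*y)) = 1 - x / (2*y).
Proof. by move=> x0 y0 yx; rewrite min_l //; field; rewrite !gt_eqF. Qed.

Lemma lp (R : realType) k (u v : R) : (0 < k)%N -> 0 <= u -> 0 <= v ->
  (u ^+ k <= v ^+ k) = (u <= v).
Proof. by move=> k0 u0 v0; rewrite ler_pXn2r // nnegrE. Qed.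

Lemma alg (R : realType) (n p1 : nat) (L C1 C2 h hs hb1 hb2 : R) :
  (0 < n)%N -> (0 < p1)%N -> 0 < L -> 0 < C1 -> 0 < C2 -> 0 < h ->
  0 < hs -> 0 < hb1 -> 0 < hb2 ->
  hs ^+ n * C2 = C1 -> hb1 ^+ p1 * C1 = L -> hb2 ^+ (p1 + n) * C2 = L ->
  let a := Num.min L (C1 * h ^+ p1) in
  let b := Num.min L (C2 * h ^+ (p1 + n)) in
  let V := a^-1 * (Num.min a b - Num.min a b * Num.min a b / (2*b)) in
  (Num.max hb1 hb2 <= hs ->
     hb1 <= hb2
     /\ (h <= hb1 -> V = 2^-1 * (h / hs) ^+ n)
     /\ (hb1 <= h <= hb2 -> V = 2^-1 * (h / hb2) ^+ (p1 + n))
     /\ (hb2 <= h -> V = 2^-1))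
  /\
  (hs <= Num.min hb1 hb2 ->
     hb2 <= hb1
     /\ (h <= hs -> V = 2^-1 * (h / hs) ^+ n)
     /\ (hs <= h <= hb2 -> V = 1 - 2^-1 * (hs / h) ^+ n)
     /\ (hb2 <= h <= hb1 -> V = 1 - 2^-1 * (h / hb1) ^+ p1)
     /\ (hb1 <= h -> V = 2^-1)).
Proof.
move=> n0 p0 L0 C10 C20 h0 hs0 hb10 hb20 Es E1 E2 a b V.
have pn0 : (0 < p1 + n)%N by rewrite addn_gt0 p0.
have ord1 : hb2 < hb1 -> hs < hb1.
  move=> lt21.
  have := ltr_pXn2r pn0 (ltW hb20 : hb2 \in Num.nneg) (ltW hb10 : hb1 \in Num.nneg).
  rewrite lt21 [hb1 ^+ _]exprD => /esym lt.
  rewrite -(@ltr_pXn2r _ n) ?nnegrE ?ltW //.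
  have P0 : 0 < hb1 ^+ p1 * C2 by rewrite mulr_gt0 ?exprn_gt0.
  rewrite -(ltr_pM2l P0) (_ : hb1 ^+ p1 * C2 * hs ^+ n = hb2 ^+ (p1 + n) * C2); last by rewrite E2 -E1 -Es; ring.
  by rewrite (_ : hb1 ^+ p1 * C2 * hb1 ^+ n = (hb1 ^+ p1 * hb1 ^+ n) * C2) ?ltr_pM2r //; ring.
have ord2 : hb1 < hb2 -> hb2 < hs.
  move=> lt12.
  have := ltr_pXn2r p0 (ltW hb10 : hb1 \in Num.nneg) (ltW hb20 : hb2 \in Num.nneg).
  rewrite lt12 => /esym lt.
  rewrite -(@ltr_pXn2r _ n) ?nnegrE ?ltW //.
  move: E2; rewrite exprD => E2.
  have P0 : 0 < hb2 ^+ p1 * C2 by rewrite mulr_gt0 ?exprn_gt0.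
  rewrite -(ltr_pM2l P0) (_ : hb2 ^+ p1 * C2 * hs ^+ n = hb2 ^+ p1 * C1); last by rewrite -Es; ring.
  rewrite (_ : hb2 ^+ p1 * C2 * hb2 ^+ n = hb1 ^+ p1 * C1); last by rewrite E1 -E2; ring.
  by rewrite ltr_pM2r.
have H10 : 0 < h ^+ p1 by rewrite exprn_gt0.
have Hn0 : 0 < h ^+ n by rewrite exprn_gt0.
have le1 : h <= hb1 -> C1 * h ^+ p1 <= L.
  by move=> hh; rewrite -E1 [X in _ <= X]mulrC ler_pM2l // lp // ltW.
have ge1 : hb1 <= h -> L <= C1 * h ^+ p1.
  by move=> hh; rewrite -E1 [X in X <= _]mulrC ler_pM2l // lp // ltW.
have le2 : h <= hb2 -> C2 * h ^+ (p1 + n) <= L.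
  by move=> hh; rewrite -E2 [X in _ <= X]mulrC ler_pM2l // lp // ltW.
have ge2 : hb2 <= h -> L <= C2 * h ^+ (p1 + n).
  by move=> hh; rewrite -E2 [X in X <= _]mulrC ler_pM2l // lp // ltW.
have P0 : 0 < C2 * h ^+ p1 by rewrite mulr_gt0.
have les : h <= hs -> C2 * h ^+ (p1 + n) <= C1 * h ^+ p1.
  move=> hh; rewrite exprD -Es.
  rewrite (_ : C2 * (h ^+ p1 * h ^+ n) = (C2 * h ^+ p1) * h ^+ n); last by ring.
  rewrite (_ : hs ^+ n * C2 * h ^+ p1 = (C2 * h ^+ p1) * hs ^+ n); last by ring.
  by rewrite ler_pM2l // lp // ltW.
have ges : hs <= h -> C1 * h ^+ p1 <= C2 * h ^+ (p1 + n).
  move=> hh; rewrite exprD -Es.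
  rewrite (_ : C2 * (h ^+ p1 * h ^+ n) = (C2 * h ^+ p1) * h ^+ n); last by ring.
  rewrite (_ : hs ^+ n * C2 * h ^+ p1 = (C2 * h ^+ p1) * hs ^+ n); last by ring.
  by rewrite ler_pM2l // lp // ltW.
have Pa : 0 < C1 * h ^+ p1 by rewrite mulr_gt0.
have Pb : 0 < C2 * h ^+ (p1 + n) by rewrite mulr_gt0 ?exprn_gt0.
have case1 : h <= hb1 -> h <= hb2 -> h <= hs -> V = 2^-1 * (h / hs) ^+ n.
  move=> h1 h2 h3; rewrite /V /a /b (min_r (le1 h1)) (min_r (le2 h2)) Vge ?les //.
  rewrite expr_div_n exprD -Es.
  by field; rewrite ?gt_eqF ?mulr_gt0 ?exprn_gt0.
have caseL : hb1 <= h -> hb2 <= h -> V = 2^-1.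
  move=> h1 h2; rewrite /V /a /b (min_l (ge1 h1)) (min_l (ge2 h2)) Vge //.
  by field; rewrite ?gt_eqF.
split.
- rewrite ge_max => /andP[h1s h2s].
  have o12 : hb1 <= hb2.
    by rewrite leNgt; apply/negP => /ord1; rewrite ltNge h1s.
  split => //; split.
    move=> hh; apply: case1 => //; [exact: le_trans o12|exact: le_trans h1s].
  split.
    move=> /andP[h1 h2]; rewrite /V /a /b (min_l (ge1 h1)) (min_r (le2 h2)) Vge ?le2 //.
    rewrite expr_div_n -E2.
    by field; rewrite ?gt_eqF ?mulr_gt0 ?exprn_gt0.
  by move=> h2; apply: caseL => //; exact: le_trans h2.
- rewrite le_min => /andP[hs1 hs2].
  have o21 : hb2 <= hb1.
    by rewrite leNgt; apply/negP => /ord2; rewrite ltNge hs2.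
  split => //; split.
    by move=> hh; apply: case1 => //; apply: le_trans hh _.
  split.
    move=> /andP[h1 h2].
    rewrite /V /a /b (min_r (le1 (le_trans h2 o21))) (min_r (le2 h2)) Vle ?ges //.
    rewrite expr_div_n exprD -Es.
    by field; rewrite ?gt_eqF ?mulr_gt0 ?exprn_gt0.
  split.
    move=> /andP[h1 h2].
    rewrite /V /a /b (min_r (le1 h2)) (min_l (ge2 h1)) Vle ?le1 //.
    rewrite expr_div_n -E1.
    by field; rewrite ?gt_eqF ?mulr_gt0 ?exprn_gt0.
  by move=> h1; apply: caseL => //; exact: le_trans h1.
Qed.


Lemma int_lin (R : realType) (b c : R) : 0 < b -> 0 < c ->
  (\int[lebesgue_measure]_(x in `[0%R, c]) ((b - x) / b)%:E = (c - c * c / (2*b))%:E)%E.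
Proof.
move=> b0 c0.
pose F := fun y : R => y - y * y / (2*b).
have dsq : forall x : R, derivable (fun y : R => y * y) x 1.
  by move=> x; apply: (@derivableM R R^o id id) => //; exact: derivable_id.
have dsq2 : forall x : R, derivable (fun y : R => y * y / (2*b)) x 1.
  by move=> x; apply: (@derivableM R R^o (fun y => y * y) (fun _ => (2*b)^-1)).
have dF : forall x : R, derivable F x 1.
  by move=> x; apply: derivableB.
have dl : forall x : R, derivable (fun y : R => b - y) x 1.
  by move=> x; apply: derivableB.
have df : forall x : R, derivable (fun y : R => (b - y) / b) x 1.
  by move=> x; apply: (@derivableM R R^o (fun y => b - y) (fun _ => b^-1)).
rewrite (@continuous_FTC2 _ _ F)//=.
- by rewrite -EFinD /F; congr EFin; ring.
- have cf : continuous (fun y : R => (b - y) / b).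
    move=> x; apply/differentiable_continuous; rewrite -derivable1_diffP; exact: df.
  by apply: continuous_in_subspaceT => x _; exact: cf.
- split.
  + by move=> x _; exact: dF.
  + apply: cvg_at_right_filter; apply/differentiable_continuous.
    by rewrite -derivable1_diffP; exact: dF.
  + apply: cvg_at_left_filter; apply/differentiable_continuous.
    by rewrite -derivable1_diffP; exact: dF.
- move=> x _.
  rewrite derive1E /F deriveB//.
  rewrite derive_id (@deriveM R R^o (fun y => y * y) (fun _ => (2*b)^-1))//.
  rewrite (@deriveM R R^o id id) //.
  rewrite derive_id.
  rewrite derive_cst scaler0 add0r.
  have sc : forall y z : R, (y *: (z : R^o)) = y * z by [].
  rewrite !sc.
  by field; rewrite gt_eqF.
Qed.

Lemma unif_tail (R : realType) (b x : R) (hb : 0 < b) : 0 <= x ->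
  uniform_prob hb `[x, +oo[ = (if x <= b then (b - x) / b else 0)%:E.
Proof.
move=> x0; rewrite /uniform_prob integral_uniform_pdf.
case: ifPn => xb.
- have -> : `[x, +oo[%classic `&` `[0, b]%classic = `[x, b]%classic :> set R.
    apply/seteqP; split => y /=; rewrite !in_itv/= ?andbT.
      by move=> [xy /andP[_ yb]]; rewrite xy yb.
    by move=> /andP[xy yb]; split => //; apply/andP; split => //; apply: le_trans xy.
  rewrite (eq_integral (fun=> (b - 0)^-1%:E)); last first.
    by move=> y; rewrite inE /= in_itv /= => /andP[xy yb]; rewrite /uniform_pdf (le_trans x0 xy) yb.
  rewrite integral_cst //= lebesgue_measure_itv /= lte_fin.
  case: ltP => xb'.
    by rewrite -EFinD -EFinM subr0 mulrC.
  have -> : x = b by apply/eqP; rewrite eq_le xb xb'.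
  by rewrite subrr mul0r mule0.
- have -> : `[x, +oo[%classic `&` `[0, b]%classic = set0 :> set R.
    apply/seteqP; split => y //= ; rewrite !in_itv/= ?andbT.
    move=> [xy /andP[_ yb]]; move: xb; rewrite (le_trans xy yb) //.
  by rewrite integral_set0.
Qed.

Lemma key (R : realType) (d : measure_display) (T : measurableType d)
  (P : probability T R) (X1 X2 : {RV P >-> R}) (a b : R) (ha : 0 < a) (hb : 0 < b) :
  indep2 X1 X2 -> is_uniform X1 0 a -> is_uniform X2 0 b ->
  probLe X1 X2 = (a^-1 * (Num.min a b - Num.min a b * Num.min a b / (2*b)))%:E.
Proof.
move=> ind u1 u2.
pose G := measurable_structure_g_sigma_algebraType__canonical__measurable_structure_Measurable (T:=lebesgue_stieltjes_measure_ocitv_type__canonical__classical_sets_Pointed R) (R.-ocitv).-measurable.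
have mX1 : measurable_fun setT (X1 : T -> G) by exact: (measurable_funPT X1).
have mX2 : measurable_fun setT (X2 : T -> G) by exact: (measurable_funPT X2).
pose Z := fun w => ((X1 w : G), (X2 w : G)).
have mZ : measurable_fun setT Z by apply: measurable_fun_pair.
pose S := [set z : G * G | z.1 <= z.2].
have mSR : measurable ([set z : R * R | z.1 <= z.2]).
  have := measurable_fun_ler (@measurable_fst _ _ R R) (@measurable_snd _ _ R R) measurableT (_ : measurable [set true]).
  by rewrite setTI; apply.
have mS : measurable S by exact: mSR.
pose D := measure_function_pushforward__canonical__measure_function_Measure P mZ.
have -> : probLe X1 X2 = D S by [].
rewrite -(@product_measure_unique _ _ G G R (uniform_prob ha) (uniform_prob hb) D _ S mS); last first.
  move=> A B mA mB; rewrite /D /= /pushforward.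
  have := ind A B mA mB; rewrite /= => ->.
  by congr (_ * _)%E; [exact: u1 A mA | exact: u2 B mB].
rewrite /product_measure1.
have h := measurable_fun_xsection (uniform_prob hb) mS.
rewrite integral_uniform //.
rewrite subr0.
rewrite (eq_integral (fun x : G => (if (x : R) <= b then (b - (x : R)) / b else 0)%:E)); last first.
  move=> x; rewrite inE /= in_itv /= => /andP[x0 _].
  have -> : xsection S x = `[x, +oo[%classic.
    by apply/seteqP; split => y; rewrite /xsection /= in_itv /= andbT inE.
  exact: unif_tail.
transitivity ((a^-1)%:E * \int[lebesgue_measure]_(x in `[0%R, Num.min a b]) ((b - x)/b)%:E)%E.
  congr (_ * _)%E; rewrite [LHS]integral_mkcond [RHS]integral_mkcond.
  apply: eq_integral => x _; rewrite !patchE !mem_setE !in_itv /= le_min.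
  by case: (0 <= x); case: (x <= a); case: (x <= b).
by rewrite int_lin ?lt_min ?ha ?hb // -EFinM.
Qed.

Lemma powR_root (R : realType) (x : R) (n : nat) : 0 <= x -> (0 < n)%N ->
  (x `^ (1 / n%:R)) ^+ n = x.
Proof.
move=> x0 n0; rewrite -powR_mulrn ?powR_ge0 // -powRrM mul1r mulVf ?powRr1 //.
by rewrite pnatr_eq0 -lt0n.
Qed.

Theorem theorem2 (R : realType) (m k1 k2 : nat) (L C1 C2 h : R)
  (d : measure_display) (T : measurableType d) (P : probability T R)
  (X1 X2 : {RV P >-> R}) :
  (1 <= m)%N -> (1 <= k1)%N -> (k1 < k2)%N -> (m < k1 + 1)%N ->
  0 < L -> 0 < C1 -> 0 < C2 -> 0 < h ->
  indep2 X1 X2 ->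
  is_uniform X1 0 (beta L C1 k1 m h) ->
  is_uniform X2 0 (beta L C2 k2 m h) ->
  let hs := hstar C1 C2 k1 k2 in
  let hb1 := hbar L C1 k1 m in
  let hb2 := hbar L C2 k2 m in
  let Pk := probLe X1 X2 in
  (Num.max hb1 hb2 <= hs ->
     hb1 <= hb2
     /\ (h <= hb1 -> Pk = (2^-1 * (h / hs) ^+ (k2 - k1))%:E)
     /\ (hb1 <= h <= hb2 -> Pk = (2^-1 * (h / hb2) ^+ (k2 + 1 - m))%:E)
     /\ (hb2 <= h -> Pk = (2^-1)%:E))
  /\
  (hs <= Num.min hb1 hb2 ->
     hb2 <= hb1
     /\ (h <= hs -> Pk = (2^-1 * (h / hs) ^+ (k2 - k1))%:E)
     /\ (hs <= h <= hb2 -> Pk = (1 - 2^-1 * (hs / h) ^+ (k2 - k1))%:E)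
     /\ (hb2 <= h <= hb1 -> Pk = (1 - 2^-1 * (h / hb1) ^+ (k1 + 1 - m))%:E)
     /\ (hb1 <= h -> Pk = (2^-1)%:E)).
Proof.
move=> m1 k11 k12 mk L0 C10 C20 h0 ind u1 u2 hs hb1 hb2 Pk.
have n0 : (0 < k2 - k1)%N by rewrite subn_gt0.
have p0 : (0 < k1 + 1 - m)%N by rewrite subn_gt0.
have ep2 : (k2 + 1 - m)%N = ((k1 + 1 - m) + (k2 - k1))%N by lia.
have ha : 0 < beta L C1 k1 m h by rewrite /beta lt_min L0 mulr_gt0 ?exprn_gt0.
have hb : 0 < beta L C2 k2 m h by rewrite /beta lt_min L0 mulr_gt0 ?exprn_gt0.
have hs0 : 0 < hs by rewrite /hs /hstar powR_gt0 // divr_gt0.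
have hb10 : 0 < hb1 by rewrite /hb1 /hbar powR_gt0 // divr_gt0.
have hb20 : 0 < hb2 by rewrite /hb2 /hbar powR_gt0 // divr_gt0.
have Es : hs ^+ (k2 - k1) * C2 = C1.
  by rewrite /hs /hstar powR_root ?divr_ge0 ?ltW // divfK // gt_eqF.
have E1 : hb1 ^+ (k1 + 1 - m) * C1 = L.
  by rewrite /hb1 /hbar powR_root ?divr_ge0 ?ltW // divfK // gt_eqF.
have E2 : hb2 ^+ ((k1 + 1 - m) + (k2 - k1)) * C2 = L.
  by rewrite /hb2 /hbar -ep2 powR_root ?divr_ge0 ?ltW // ?divfK // ?gt_eqF // ep2 addn_gt0 p0.
have := @alg R _ _ _ _ _ _ _ _ _ n0 p0 L0 C10 C20 h0 hs0 hb10 hb20 Es E1 E2.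
rewrite /Pk (@key R d T P X1 X2 _ _ ha hb ind u1 u2) /beta ep2 /=.
move=> [A1 A2]; split.
- move=> H; have [oo1 [q1 [q2 q3]]] := A1 H.
  split => //; split; first by move=> /q1 ->.
  by split; [move=> /q2 -> | move=> /q3 ->].
- move=> H; have [oo1 [q1 [q2 [q3 q4]]]] := A2 H.
  split => //; split; first by move=> /q1 ->.
  split; first by move=> /q2 ->.
  by split; [move=> /q3 -> | move=> /q4 ->].
Qed.
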